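(* Suppose that for every $m\ge 1$, any $2m$ mass distributions in $\mathbb{R}^2$ can be simultaneously bisected by an arrangement of $m$ lines. Then for every $n\ge 1$ and any $n$ valuation functions $v_1,\ldots,v_n$ on $[0,1]$, there exist at most $n$ cut points partitioning $[0,1]$ into at most $n+1$ intervals, each labeled ''$+$'' or ''$-$'' with consecutive intervals receiving different labels, such that $v_i(\mathcal{I}^+)=v_i(\mathcal{I}^-)$ for all $i$, where $\mathcal{I}^{\pm}$ is the union of the intervals labeled ''$\pm$''.
   Context: A mass distribution $\mu$ on $\mathbb{R}^d$ is a measure on $\mathbb{R}^d$ such that all open sets are measurable, $0<\mu(\mathbb{R}^d)<\infty$, and $\mu(S)=0$ for every subset $S$ contained in a lower-dimensional affine subspace (for $d=1$: every point has measure zero). A valuation function on $[0,1]$ is such a mass distribution supported on $[0,1]$. For an arrangement $A=(\ell_1,\ldots,\ell_m)$ of oriented lines in $\mathbb{R}^2$, let $R_i^+$ be the open positive side of $\ell_i$; $R^+(A)$ (resp. $R^-(A)$) is the set of points not on any $\ell_i$ lying in an even (resp. odd) number of the $R_i^+$. $A$ bisects a mass distribution $\mu$ if $\mu(R^+(A))=\mu(R^-(A))$. *)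

(* Defs.v *)
From HB Require Import structures.
From mathcomp Require Import all_boot all_order all_algebra.
From mathcomp Require Import all_classical all_reals all_analysis.
Set Implicit Arguments. Unset Strict Implicit. Unset Printing Implicit Defensive.
Import Order.TTheory GRing.Theory Num.Theory.
Local Open Scope classical_set_scope.
Local Open Scope ring_scope.

(* Measures are taken on the Borel sigma-algebras of R and of R^2 = R * R
   (product sigma-algebra, which is the Borel one). *)

Definition line_set {R : realType} (a b c : R) : set (R * R) :=
  [set p | a * p.1 + b * p.2 = c].

(** Mass distribution on R^2. Lower-dimensional affine subspaces of R^2 are
    points and lines; every point lies on a line. *)
Definition mass_distribution2 {R : realType}
    (mu : {measure set (R * R) -> \bar R}) : Prop :=
  (0 < mu setT)%E /\ (mu setT < +oo)%E /\
  (forall S : set (R * R), measurable S ->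
     (exists a b c : R, (a != 0 \/ b != 0) /\ S `<=` line_set a b c) ->
     mu S = 0%E).

Definition mass_distribution1 {R : realType}
    (mu : {measure set R -> \bar R}) : Prop :=
  (0 < mu setT)%E /\ (mu setT < +oo)%E /\ (forall x : R, mu [set x] = 0%E).

Definition valuation_function {R : realType}
    (mu : {measure set R -> \bar R}) : Prop :=
  mass_distribution1 mu /\ mu (~` [set x : R | 0 <= x <= 1]) = 0%E.

(** An oriented line is a triple (a, b, c) with (a, b) <> (0, 0); its open
    positive side is { p | a p.1 + b p.2 > c }. *)
Definition oriented_line {R : realType} (l : R * R * R) : Prop :=
  l.1.1 != 0 \/ l.1.2 != 0.

Definition on_line {R : realType} (l : R * R * R) (p : R * R) : bool :=
  l.1.1 * p.1 + l.1.2 * p.2 == l.2.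

Definition pos_side {R : realType} (l : R * R * R) (p : R * R) : bool :=
  l.1.1 * p.1 + l.1.2 * p.2 > l.2.

Definition Rplus {R : realType} {m : nat} (A : 'I_m -> R * R * R) : set (R * R) :=
  [set p | (forall i, ~~ on_line (A i) p) /\
           ~~ odd #|[set i : 'I_m | pos_side (A i) p]|].

Definition Rminus {R : realType} {m : nat} (A : 'I_m -> R * R * R) : set (R * R) :=
  [set p | (forall i, ~~ on_line (A i) p) /\
           odd #|[set i : 'I_m | pos_side (A i) p]|].

Definition bisects {R : realType} {m : nat} (A : 'I_m -> R * R * R)
    (mu : {measure set (R * R) -> \bar R}) : Prop :=
  mu (Rplus A) = mu (Rminus A).

(** Cut points t = [t_1; ...; t_k] with 0 < t_1 < ... < t_k < 1 partition [0,1]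
    into the k+1 intervals J_0, ..., J_k, where with t_0 = 0, t_(k+1) = 1:
    J_j = [t_j, t_(j+1)) for j < k and J_k = [t_k, 1]. *)
Definition cut_ends {R : realType} (t : seq R) : seq R := 0 :: rcons t 1.

Definition piece {R : realType} (t : seq R) (j : nat) : set R :=
  let e := cut_ends t in
  if (j < size t)%N then [set x | e`_j <= x < e`_j.+1]
  else [set x | e`_j <= x <= e`_j.+1].

(** Union of the intervals whose label (true = "+", false = "-") is b. *)
Definition labeled_union {R : realType} (t : seq R) (lab : nat -> bool)
    (b : bool) : set R :=
  \bigcup_(j in [set j : nat | (j <= size t)%N /\ lab j = b]) piece t j.

(* Main.v *)
Require Import Defs.
From HB Require Import structures.
From mathcomp Require Import all_boot all_order all_algebra.
From mathcomp Require Import all_classical all_reals all_analysis.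
From mathcomp Require Import polyrcf measurable_realfun ring zify lra.
Import Order.TTheory GRing.Theory Num.Theory.
Local Open Scope classical_set_scope.
Local Open Scope ring_scope.
Set Implicit Arguments. Unset Strict Implicit. Unset Printing Implicit Defensive.

Section Comb.
Variable R : realType.

Definition pc (a : R) (t : seq R) (j : nat) : set R :=
  let e := a :: rcons t 1 in
  if (j < size t)%N then [set x | e`_j <= x < e`_j.+1]
  else [set x | e`_j <= x <= e`_j.+1].

Lemma count0 (t : seq R) x : (forall w, w \in t -> x < w) ->
  count (fun w => w <= x) t = 0%N.
Proof.
elim: t => [|w t IH] //= H.
rewrite IH; last by move=> u hu; apply: H; rewrite inE hu orbT.
have := H w; rewrite inE eqxx => /(_ isT) hw.
by rewrite leNgt hw.
Qed.

Lemma pcP (t : seq R) : forall (a : R) (lab : nat -> bool) b x,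
  sorted <%R (a :: rcons t 1) ->
  (exists j, (j <= size t)%N /\ lab j = b /\ pc a t j x) <->
  (a <= x <= 1 /\ lab (count (fun z => z <= x) t) = b).
Proof.
elim: t => [|z t IH] a lab b x Hs.
  split.
    by move=> [[|j] [//= _ [Hl Hx]]]; split.
  by move=> [Hx Hl]; exists 0%N; split.
have /= /andP[az Hs'] := Hs.
have Hz : forall w, w \in rcons t 1 -> z < w.
  move: Hs'; rewrite path_sortedE; last exact: lt_trans.
  by move=> /andP[/allP H _].
have z1 : z < 1 by apply: Hz; rewrite mem_rcons inE eqxx.
have Ht : forall w, w \in t -> z < w.
  by move=> w hw; apply: Hz; rewrite mem_rcons inE hw orbT.
have IH' := IH z (fun j => lab j.+1) b x Hs'.
split.
  move=> [[|j] [Hj [Hl Hx]]].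
    move: Hx; rewrite /pc /= => /andP[ax xz].
    split; first by rewrite ax /= ltW // (lt_trans xz z1).
    rewrite /= leNgt xz /= count0 //.
    by move=> w /Ht zw; apply: lt_trans zw.
  have [/andP[zx x1] Hl'] : (z <= x <= 1) /\ lab (count (fun z => z <= x) t).+1 = b.
    by apply/IH'; exists j; split.
  split; first by rewrite (le_trans (ltW az) zx).
  by rewrite /= zx.
move=> [/andP[ax x1] Hl].
case: (ltP x z) => xz.
  exists 0%N; split => //; split.
    move: Hl; rewrite /= leNgt xz /= count0 //.
    by move=> w /Ht zw; apply: lt_trans zw.
  by rewrite /pc /= ax xz.
have [j [Hj [Hl' Hx]]] : exists j, (j <= size t)%N /\ lab j.+1 = b /\ pc z t j x.
  by apply/IH'; split; [rewrite xz x1 | move: Hl; rewrite /= xz].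
by exists j.+1; split.
Qed.

Lemma Gsplit (s : R -> bool) (Z : seq R) : forall (a : R),
  sorted <%R (a :: Z) -> all (fun z => z < 1) Z ->
  (forall x y, a < x -> x <= y -> y < 1 ->
     (forall z, z \in Z -> (z < x) || (y < z)) -> s x = s y) ->
  exists t b0, subseq t Z /\
    forall x, a < x < 1 -> x \notin Z ->
      s x = b0 (+) odd (count (fun z => z <= x) t).
Proof.
elim: Z => [|z Z IH] a Hsort Hall Hs.
  exists [::], (s ((a + 1) / 2)); split => // x /andP[ax x1] _ /=.
  rewrite addbF.
  have a1 : a < 1 by apply: lt_trans x1.
  have am : a < (a + 1) / 2 by rewrite ltr_pdivlMr // mulrDr mulr1 ltrD2l.
  have m1 : (a + 1) / 2 < 1 by rewrite ltr_pdivrMr // mulrDr mulr1 ltrD2r.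
  case: (leP x ((a + 1) / 2)) => h.
    by apply: Hs.
  by apply/esym; apply: Hs => //; apply: ltW.
move: Hsort => /= /andP[az Hsort'].
move: Hall => /= /andP[z1 Hall'].
have HZ : forall w, w \in Z -> z < w.
  move: Hsort'; rewrite path_sortedE; last exact: lt_trans.
  by move=> /andP[/allP H _].
have [t' [b0' [Hsub HI]]] : exists t b0, subseq t Z /\
    forall x, z < x < 1 -> x \notin Z ->
      s x = b0 (+) odd (count (fun z => z <= x) t).
  apply: IH => // x y zx xy y1 HZ'.
  apply: Hs => //; first by apply: lt_trans zx.
  move=> w; rewrite inE => /orP[/eqP -> |]; first by rewrite zx.
  exact: HZ'.
have Ht' : forall w, w \in t' -> z < w by move=> w /(mem_subseq Hsub); apply: HZ.
set m := (a + z) / 2.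
have am : a < m by rewrite ltr_pdivlMr // mulrDr mulr1 ltrD2l.
have mz : m < z by rewrite ltr_pdivrMr // mulrDr mulr1 ltrD2r.
have Hleft : forall x, a < x -> x < z -> s x = s m.
  move=> x ax xz.
  have Hc : forall u y, y < z -> forall w, w \in z :: Z -> (w < u) || (y < w).
    move=> u y yz w; rewrite inE => /orP[/eqP -> |/HZ zw]; first by rewrite yz orbT.
    by rewrite (lt_trans yz zw) orbT.
  case: (leP x m) => h.
    by apply: Hs => //; [exact: lt_trans mz z1 | exact: Hc x m mz].
  apply/esym; apply: Hs => //; [exact: ltW | exact: lt_trans xz z1 | exact: Hc m x xz].
case: (eqVneq (s m) b0') => Hc.
  exists t', b0'; split; first by apply: subseq_trans Hsub (subseq_cons Z z).
  move=> x /andP[ax x1]; rewrite inE negb_or => /andP[xz xZ].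
  case: (ltP x z) => h.
    rewrite Hleft // Hc count0 ?addbF //.
    by move=> w /Ht' zw; apply: lt_trans zw.
  apply: HI => //; rewrite x1 andbT lt_neqAle h andbT.
  by rewrite eq_sym.
exists (z :: t'), (s m); split; first by rewrite /= eqxx.
move=> x /andP[ax x1]; rewrite inE negb_or => /andP[xz xZ].
case: (ltP x z) => h.
  rewrite /= leNgt h /= Hleft // count0 ?addbF //.
  by move=> w /Ht' zw; apply: lt_trans zw.
rewrite /= h /= HI //; last by rewrite x1 andbT lt_neqAle h andbT eq_sym.
by case: (s m) Hc; case: (b0'); case: (odd _).
Qed.

End Comb.
Section Meas.
Variable R : realType.

Definition pt (u : R) : R * R := (u, u ^+ 2).
Definition gam (s : R) (t : R) : R * R := pt (t + s).
Definition D01 : set R := `]0, 1[%classic.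

Lemma mD01 : measurable D01. Proof. exact: measurable_itv. Qed.

Lemma mgam s : measurable_fun setT (gam s).
Proof.
apply: measurable_fun_pair.
  by apply: measurable_funD => //; exact: measurable_cst.
by apply: measurable_funX; apply: measurable_funD => //; exact: measurable_cst.
Qed.

Section push.
Variables (v : {measure set R -> \bar R}) (s : R).
Definition push : set (R * R) -> \bar R := fun A => v (gam s @^-1` A `&` D01).
Let push0 : push set0 = 0%E.
Proof. by rewrite /push preimage_set0 set0I measure0. Qed.
Let push_ge0 A : (0 <= push A)%E.
Proof. exact: measure_ge0. Qed.
Let push_sa : semi_sigma_additive push.
Proof.
move=> F mF tF mUF; rewrite /push preimage_bigcup setI_bigcupl.
apply: measure_semi_sigma_additive.
- move=> n; apply: measurableI; last exact: mD01.
  by rewrite -[X in measurable X]setTI; exact: mgam.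
- apply/trivIsetP => /= i j _ _ ij; rewrite setIACA -preimage_setI.
  by move/trivIsetP : tF => /(_ _ _ _ _ ij) ->//; rewrite preimage_set0 set0I.
- rewrite -setI_bigcupl -preimage_bigcup; apply: measurableI; last exact: mD01.
  by rewrite -[X in measurable X]setTI; exact: mgam.
Qed.
HB.instance Definition _ := isMeasure.Build _ _ _ push push0 push_ge0 push_sa.
End push.

Lemma set_consE (x : R) (l : seq R) : [set` x :: l] = [set x] `|` [set` l].
Proof.
apply/seteqP; split => y /=; rewrite inE.
  by move=> /orP[/eqP ->|h]; [left|right].
by move=> [->|h]; rewrite ?eqxx ?h ?orbT.
Qed.

Lemma mseq (l : seq R) : measurable [set` l].
Proof.
elim: l => [|x l IH]; first by rewrite set_nil.
have m1 : measurable ([set x] : set R) := measurable_set1 x.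
by rewrite set_consE; apply: measurableU.
Qed.

Lemma mfin (X : set R) (l : seq R) : X `<=` [set` l] -> measurable X.
Proof.
move=> Xl.
have -> : X = [set` seq.filter (fun x => `[< X x >]) l].
  apply/seteqP; split => y /=; rewrite mem_filter.
    by move=> Xy; apply/andP; split; [apply/asboolP | exact: Xl].
  by move=> /andP[/asboolP].
exact: mseq.
Qed.

Lemma mU2 (v : {measure set R -> \bar R}) (A B : set R) :
  measurable A -> measurable B -> (v (A `|` B) <= v A + v B)%E.
Proof. exact: measureU2. Qed.

Section val.
Variable v : {measure set R -> \bar R}.
Hypothesis Hv : valuation_function v.

Lemma vseq (l : seq R) : v [set` l] = 0%E.
Proof.
have [_ [_ H1]] := Hv.1.
elim: l => [|x l IH]; first by rewrite set_nil measure0.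
apply/eqP; rewrite eq_le measure_ge0 andbT set_consE.
have m1 : measurable ([set x] : set R) := measurable_set1 x.
apply: le_trans (@mU2 v _ _ m1 (mseq l)) _.
rewrite -[leRHS](adde0 0%E); apply: leeD.
  by have := H1 x => /eqP; rewrite eq_le => /andP[h _]; exact: h.
by move: IH => /eqP; rewrite eq_le => /andP[h _]; exact: h.
Qed.

Lemma vnullD (A B N : set R) : measurable A -> measurable B -> measurable N ->
  v N = 0%E -> A `\` N = B `\` N -> v A = v B.
Proof.
move=> mA mB mN vN E.
have H : forall X, measurable X -> v X = v (X `\` N).
  move=> X mX; transitivity (v (X `\` N) + v (X `&` N))%E; first exact: measureDI.
  have h : (v (X `&` N) <= v N)%E.
    by apply: le_measure; [rewrite inE; exact: measurableI | rewrite inE | exact: subIsetr].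
  have -> : v (X `&` N) = 0%E.
    by apply/eqP; rewrite eq_le measure_ge0 andbT -vN.
  by rewrite adde0.
by rewrite (H A mA) (H B mB) E.
Qed.

Lemma mfromD (X B N : set R) (l : seq R) : measurable B -> measurable N ->
  X `\` N = B `\` N -> X `&` N `<=` [set` l] -> measurable X.
Proof.
move=> mB mN E Xl.
have -> : X = (B `\` N) `|` (X `&` N).
  rewrite -E; apply/seteqP; split => y /=.
    by move=> Xy; case: (pselect (N y)) => h; [right|left].
  by case=> [[]|[]].
apply: measurableU; first exact: measurableD.
exact: mfin Xl.
Qed.

Lemma v_notD01 : v (~` D01) = 0%E.
Proof.
have [[_ [_ H1]] H2] := Hv.
apply/eqP; rewrite eq_le measure_ge0 andbT.
have m01 : measurable (~` [set x : R | 0 <= x <= 1]).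
  apply: measurableC.
  have -> : [set x : R | 0 <= x <= 1] = `[0, 1]%classic.
    by apply/seteqP; split => y /=; rewrite in_itv.
  exact: measurable_itv.
apply: (@le_trans _ _ (v (~` [set x : R | 0 <= x <= 1] `|` [set` [:: 0; 1]]))).
  apply: le_measure; rewrite ?inE.
  - exact: measurableC mD01.
  - by apply: measurableU => //; exact: mseq.
  move=> y Hy; rewrite /D01 /= in_itv /= in Hy.
  case: (pselect (0 <= y <= 1)) => h; [right|by left].
  rewrite /= !inE; move/andP: h => [h0 h1].
  case: (eqVneq y 0) => [//|y0]; case: (eqVneq y 1) => [//|y1].
  exfalso; apply: Hy; by rewrite lt_neqAle eq_sym y0 h0 /= lt_neqAle y1 h1.
apply: le_trans (@mU2 v _ _ _ _) _; [exact: m01 | exact: mseq |].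
by rewrite H2 vseq adde0.
Qed.

Lemma v_D01_pos : (0 < v D01)%E.
Proof.
have [[H0 [_ _]] _] := Hv.
apply: lt_le_trans H0 _.
rewrite -(setUv D01).
apply: le_trans (@mU2 v _ _ _ _) _; [exact: mD01 | exact: measurableC mD01 |].
by rewrite v_notD01 adde0.
Qed.

End val.

Definition gl (l : R * R * R) : {poly R} := Poly [:: - l.2; l.1.1; l.1.2].

Lemma gl_eval l u : (gl l).[u] = l.1.1 * u + l.1.2 * u ^+ 2 - l.2.
Proof. rewrite /gl /= !horner_cons horner0; ring. Qed.

Lemma gl_neq0 l : oriented_line l -> gl l != 0.
Proof.
move=> Hl; apply/negP => /eqP H.
have h1 := coef_Poly [:: - l.2; l.1.1; l.1.2] 1.
have h2 := coef_Poly [:: - l.2; l.1.1; l.1.2] 2.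
rewrite -/(gl l) H coef0 /= in h1 h2.
rewrite coef0 in h2.
by case: Hl; [rewrite -h1 | rewrite -h2]; rewrite eqxx.
Qed.

Lemma size_gl l : (size (gl l) <= 3)%N.
Proof. exact: size_Poly. Qed.

Lemma pos_sideE l u : pos_side l (pt u) = (0 < (gl l).[u]).
Proof. by rewrite /pos_side gl_eval subr_gt0. Qed.

Lemma on_lineE l u : on_line l (pt u) = root (gl l) u.
Proof. by rewrite /on_line rootE gl_eval subr_eq0. Qed.

Lemma mpre (S : set (R * R)) s : measurable S -> measurable (gam s @^-1` S `&` D01).
Proof.
move=> mS; apply: measurableI; last exact: mD01.
by have := @mgam s measurableT _ mS; rewrite setTI.
Qed.

Lemma pushE (v : {measure set R -> \bar R}) s A :
  (push v s : {measure set (R * R) -> \bar R}) A = v (gam s @^-1` A `&` D01).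
Proof. by []. Qed.

Lemma mass_push (v : {measure set R -> \bar R}) s :
  valuation_function v -> mass_distribution2 (push v s).
Proof.
move=> Hv; have [[_ [vT _]] _] := Hv.
split; [|split].
- by rewrite pushE preimage_setT setTI; exact: (@v_D01_pos v Hv).
- apply: le_lt_trans vT; rewrite pushE.
  by apply: le_measure; [rewrite inE; exact: mpre | rewrite inE |].
- move=> S mS [a [b [c [Hab HS]]]].
  set q := gl ((a, b), c).
  have q0 : q != 0 by apply: gl_neq0.
  set l := map (fun u => u - s) (roots q s (1 + s)).
  apply/eqP; rewrite eq_le measure_ge0 andbT -(@vseq v Hv l) pushE.
  apply: le_measure; rewrite ?inE; [exact: mpre | exact: mseq |].
  move=> t [/HS Ht Dt]; rewrite /= in Ht.
  apply/mapP; exists (t + s); last by rewrite addrK.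
  rewrite -(roots_on_roots s (1 + s) q0) in_itv /=.
  move: Dt; rewrite /D01 /= in_itv /= => /andP[t0 t1].
  by rewrite -[X in X < _ + _]add0r !ltrD2r t0 t1 rootE gl_eval /= Ht subrr.
Qed.
End Meas.
Arguments D01 {R}.
Section Parity.
Variable R : realType.
Variables (m : nat) (A : 'I_m -> R * R * R).
Hypothesis HA : forall i, oriented_line (A i).

Definition sP (u : R) := [forall i, ~~ on_line (A i) (pt u)] &&
  ~~ odd #|[set i | pos_side (A i) (pt u)]|.
Definition sM (u : R) := [forall i, ~~ on_line (A i) (pt u)] &&
  odd #|[set i | pos_side (A i) (pt u)]|.

Lemma RplusE u : Rplus A (pt u) <-> sP u.
Proof.
rewrite /Rplus /sP /=; split.
  by move=> [H1 H2]; rewrite H2 andbT; apply/forallP.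
by move=> /andP[/forallP H1 H2].
Qed.

Lemma RminusE u : Rminus A (pt u) <-> sM u.
Proof.
rewrite /Rminus /sM /=; split.
  by move=> [H1 H2]; rewrite H2 andbT; apply/forallP.
by move=> /andP[/forallP H1 H2].
Qed.

Definition PP : {poly R} := \prod_(i < m) gl (A i).

Lemma PP_neq0 : PP != 0.
Proof. by apply/prodf_neq0 => i _; apply: gl_neq0. Qed.

Lemma PP_nroot u : ~~ root PP u -> forall i, ~~ root (gl (A i)) u.
Proof.
rewrite /root /PP horner_prod => /prodf_neq0 H i.
exact: H.
Qed.

Lemma sM_nroot u : ~~ root PP u -> sM u = ~~ sP u.
Proof.
move=> /PP_nroot H; rewrite /sM /sP.
have -> : [forall i, ~~ on_line (A i) (pt u)] by apply/forallP => i; rewrite on_lineE.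
by rewrite /= negbK.
Qed.

Lemma Kc (l : R * R * R) (x y : R) : x <= y -> (forall w, x <= w <= y -> ~~ root (gl l) w) ->
  pos_side l (pt x) = pos_side l (pt y).
Proof.
move=> xy H; rewrite !pos_sideE.
have gx : (gl l).[x] != 0 by have := H x; rewrite lexx xy => /(_ isT).
have gy : (gl l).[y] != 0 by have := H y; rewrite lexx xy => /(_ isT).
case: (ltP 0 (gl l).[x]) => hx; case: (ltP 0 (gl l).[y]) => hy //.
  have [w wxy rw] : exists2 w, x <= w <= y & root (- gl l) w.
    by apply: poly_ivt => //; rewrite !hornerN oppr_le0 oppr_ge0 (ltW hx) hy.
  by move: (H w wxy); rewrite -rootN rw.
have [w wxy rw] : exists2 w, x <= w <= y & root (gl l) w.
  by apply: poly_ivt => //; rewrite hx (ltW hy).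
by move: (H w wxy); rewrite rw.
Qed.

Lemma Kall (x y : R) : x <= y -> (forall w, x <= w <= y -> ~~ root PP w) ->
  sP x = sP y /\ sM x = sM y.
Proof.
move=> xy H.
have Hi : forall i, pos_side (A i) (pt x) = pos_side (A i) (pt y).
  move=> i; apply: Kc => // w wxy; exact: PP_nroot (H w wxy) i.
have Es : [set i | pos_side (A i) (pt x)] = [set i | pos_side (A i) (pt y)].
  by apply/seteqP; split => i /=; rewrite Hi.
have nx : ~~ root PP x by apply: H; rewrite lexx xy.
have ny : ~~ root PP y by apply: H; rewrite lexx xy.
have Fx : [forall i, ~~ on_line (A i) (pt x)].
  by apply/forallP => i; rewrite on_lineE; apply: PP_nroot.
have Fy : [forall i, ~~ on_line (A i) (pt y)].
  by apply/forallP => i; rewrite on_lineE; apply: PP_nroot.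
by rewrite /sP /sM Fx Fy Es.
Qed.

Lemma size_PP : (size PP <= (2 * m).+1)%N.
Proof.
apply: leq_trans (size_poly_prod_leq _ _) _.
have : (\sum_(i < m) size (gl (A i)) <= 3 * m)%N.
  have h : (\sum_(i < m) size (gl (A i)) <= \sum_(i < m) 3)%N.
    by apply: leq_sum => i _; exact: size_gl.
  by move: h; rewrite sum_nat_const card_ord mulnC.
rewrite cardT size_enum_ord => h; rewrite leq_subLR.
apply: (@leq_trans (3 * m).+1); first exact: h.
lia.
Qed.

End Parity.

Lemma luP (R : realType) (t : seq R) lab b x : sorted <%R (cut_ends t) ->
  labeled_union t lab b x <-> (0 <= x <= 1 /\ lab (count (fun z => z <= x) t) = b).
Proof.
move=> Hs; rewrite -(pcP lab b x Hs); split.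
  by move=> [j [Hj Hl] Hx]; exists j.
by move=> [j [Hj [Hl Hx]]]; exists j.
Qed.

Lemma mlu (R : realType) (t : seq R) lab b : measurable (labeled_union t lab b).
Proof.
apply: bigcup_measurable => j _; rewrite /piece; case: ifP => _.
  set a := _`_j; set c := _`_j.+1.
  have -> : [set x : R | a <= x < c] = `[a, c[%classic.
    by apply/seteqP; split => y /=; rewrite in_itv.
  exact: measurable_itv.
set a := _`_j; set c := _`_j.+1.
have -> : [set x : R | a <= x <= c] = `[a, c]%classic.
  by apply/seteqP; split => y /=; rewrite in_itv.
exact: measurable_itv.
Qed.

Unset Implicit Arguments. Set Strict Implicit.

Theorem lemma2p1 (R : realType) :
  (forall m : nat, (1 <= m)%N ->
     forall mus : 'I_(2 * m) -> {measure set (R * R) -> \bar R},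
       (forall j, mass_distribution2 (mus j)) ->
       exists A : 'I_m -> R * R * R,
         (forall i, oriented_line (A i)) /\ (forall j, bisects A (mus j))) ->
  forall n : nat, (1 <= n)%N ->
  forall v : 'I_n -> {measure set R -> \bar R},
    (forall i, valuation_function (v i)) ->
    exists (t : seq R) (lab : nat -> bool),
      [/\ (size t <= n)%N,
          sorted <%R (cut_ends t),
          (forall j, (j < size t)%N -> lab j != lab j.+1) &
          forall i, v i (labeled_union t lab true) = v i (labeled_union t lab false)].
Proof.
move=> Hyp [//|n'] _ v Hv.
pose m := uphalf n'.+1.
have m1 : (1 <= m)%N by [].
have Hm : (2 * m = n'.+1 + odd n'.+1)%N.
  rewrite /m uphalf_half; have := odd_double_half n'.+1.
  move: (odd n'.+1) (n'.+1./2) => o h; rewrite -muln2; case: o => /=; lia.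
have nm : (n'.+1 <= 2 * m)%N by rewrite Hm leq_addr.
pose mus := fun j : 'I_(2 * m) =>
  (push (v (inord (if (j < n'.+1)%N then (j : nat) else 0%N)))
     (if (j < n'.+1)%N then 0 else 2) : {measure set (R * R) -> \bar R}).
have Hmass : forall j, mass_distribution2 (mus j) by move=> j; apply: mass_push.
have [A [HA Hb]] := Hyp m m1 mus Hmass.
have P0 := PP_neq0 HA.
set P := PP A in P0.
set Z := roots P 0 1.
have HZ : roots_on P `]0, 1[ Z by apply: roots_on_roots.
have Zs : sorted <%R Z by apply: sorted_roots.
have Zin : forall z, z \in Z -> 0 < z < 1.
  by move=> z; rewrite -HZ in_itv /= => /andP[].
have ZP : forall x, 0 < x < 1 -> x \notin Z -> ~~ root P x.
  move=> x Hx xZ; apply/negP => rx; move: xZ; rewrite -HZ in_itv /= Hx rx.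
  by [].
have [t [b0 [Hsub Hrep]]] : exists t b0, subseq t Z /\
    forall x, 0 < x < 1 -> x \notin Z ->
      sP A x = b0 (+) odd (count (fun z => z <= x) t).
  apply: Gsplit.
  - rewrite /= path_sortedE; last exact: lt_trans.
    by rewrite Zs andbT; apply/allP => z /Zin /andP[].
  - by apply/allP => z /Zin /andP[].
  move=> x y x0 xy y1 Hxy; apply: (Kall xy _).1 => w /andP[xw wy].
  apply/negP => rw.
  have : w \in Z by rewrite -HZ in_itv /= rw (lt_le_trans x0 xw) (le_lt_trans wy y1).
  by move/Hxy; rewrite ltNge xw /= ltNge wy.
have tin : forall z, z \in t -> 0 < z < 1 by move=> z /(mem_subseq Hsub) /Zin.
have ts : sorted <%R t by apply: subseq_sorted Hsub Zs; exact: lt_trans.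
have Hcut : sorted <%R (cut_ends t).
  rewrite /cut_ends /= rcons_path path_sortedE; last exact: lt_trans.
  rewrite ts andbT; apply/andP; split.
    by apply/allP => z /tin /andP[].
  have := mem_last 0 t; rewrite inE => /orP[/eqP -> //|/tin /andP[]//].
have sZ : (size Z < size P)%N.
  apply: max_poly_roots => //; last exact: lt_sorted_uniq.
  by apply/allP => z; rewrite -HZ => /andP[].
have sP2 : (size P <= (2 * m).+1)%N by apply: size_PP.
have sizeZ : (size Z <= n'.+1)%N.
  case Ho : (odd n'.+1); last by move: Hm; rewrite Ho addn0 => Hm'; lia.
  rewrite Ho in Hm.
  have j0lt : (n'.+1 < 2 * m)%N by rewrite Hm addn1.
  pose j0 := Ordinal j0lt.
  have Hj0 := Hb j0.
  rewrite /bisects /mus /= ltnn !pushE in Hj0.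
  set v0 := v (inord 0) in Hj0.
  have Hv0 : valuation_function v0 by apply: Hv.
  have [r [r23 rr]] : exists r, 2 <= r <= 3 /\ root P r.
    apply: contrapT => Hno.
    have Hn : forall w, 2 <= w <= 3 -> ~~ root P w.
      by move=> w hw; apply/negP => rw; apply: Hno; exists w.
    have K : forall x, D01 x -> sP A (x + 2) = sP A 2 /\ sM A (x + 2) = sM A 2.
      move=> x; rewrite /D01 /= in_itv /= => /andP[x0 x1].
      have h2 : 2 <= x + 2 by rewrite lerDr ltW.
      have h3 : x + 2 <= 3 by rewrite -lerBrDr; lra.
      have Hn' : forall w, 2 <= w <= x + 2 -> ~~ root P w.
        by move=> w /andP[a b]; apply: Hn; rewrite a (le_trans b h3).
      have [e1 e2] := Kall h2 Hn'.
      by split.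
    have s2 : sM A 2 = ~~ sP A 2.
      by apply: sM_nroot; apply: Hn; apply/andP; split; lra.
    have Ep : gam 2 @^-1` Rplus A `&` D01 = if sP A 2 then D01 else set0.
      apply/seteqP; split => x.
        move=> [/RplusE Hx Dx]; have [e1 _] := K x Dx.
        by rewrite e1 in Hx; rewrite Hx.
      case E: (sP A 2) => // Dx; split => //; apply/RplusE.
      by have [e1 _] := K x Dx; rewrite e1 E.
    have Em : gam 2 @^-1` Rminus A `&` D01 = if sP A 2 then set0 else D01.
      apply/seteqP; split => x.
        move=> [/RminusE Hx Dx]; have [_ e2] := K x Dx.
        by rewrite e2 s2 in Hx; move: Hx; case: (sP A 2).
      case E: (sP A 2) => // Dx; split => //; apply/RminusE.
      by have [_ e2] := K x Dx; rewrite e2 s2 E.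
    rewrite Ep Em in Hj0.
    have := @v_D01_pos _ v0 Hv0.
    by case: (sP A 2) in Hj0 *; [rewrite Hj0 | rewrite -Hj0]; rewrite measure0 ltxx.
  have rZ : r \notin Z.
    apply/negP => /Zin /andP[_ r1]; move: r23 => /andP[r2 _].
    by have := le_lt_trans r2 r1; rewrite ?ltr_nat ?ltrn1 ?ltr1n.
  have : (size (rcons Z r) < size P)%N.
    apply: max_poly_roots => //.
      by rewrite all_rcons rr /=; apply/allP => z; rewrite -HZ => /andP[].
    by rewrite rcons_uniq rZ /=; exact: lt_sorted_uniq.
  rewrite size_rcons => h; lia.
exists t, (fun j => b0 (+) odd j); split.
- exact: leq_trans (size_subseq Hsub) sizeZ.
- exact: Hcut.
- by move=> j _ /=; case: (b0); case: (odd j).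
move=> i.
have Hi := Hb (widen_ord nm i).
rewrite /bisects /mus /= ltn_ord inord_val !pushE in Hi.
have Hvi := Hv i.
set N := ~` D01 `|` [set` Z].
have mN : measurable N by apply: measurableU; [exact: (measurableC (@mD01 R)) | exact: mseq].
have vN : v i N = 0%E.
  apply/eqP; rewrite eq_le measure_ge0 andbT.
  apply: le_trans (@mU2 _ (v i) _ _ (measurableC (@mD01 R)) (mseq Z)) _.
  by rewrite (v_notD01 Hvi) (vseq Hvi) adde0.
have eqv : forall x, D01 x -> x \notin Z -> forall b,
    labeled_union t (fun j => b0 (+) odd j) b x <->
    (if b then Rplus A else Rminus A) (gam 0 x).
  move=> x Dx xZ b.
  have x01 : 0 < x < 1 by move: Dx; rewrite /D01 /= in_itv.
  have nr := ZP x x01 xZ.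
  have x01' : 0 <= x <= 1 by case/andP: x01 => a c; rewrite !ltW.
  rewrite luP // /gam addr0.
  case: b.
    split; first by move=> [_ h]; apply/RplusE; rewrite Hrep // h.
    by move=> /RplusE h; split => //; rewrite -Hrep.
  split.
    by move=> [_ h]; apply/RminusE; rewrite sM_nroot // Hrep // h.
  move=> /RminusE h; split => //.
  by move: h; rewrite sM_nroot // Hrep //; case: (_ (+) _).
have key : forall b, labeled_union t (fun j => b0 (+) odd j) b `\` N =
    (gam 0 @^-1` (if b then Rplus A else Rminus A) `&` D01) `\` N.
  move=> b; apply/seteqP; split => x [Hx Nx].
    have Dx : D01 x by apply: contrapT => h; apply: Nx; left.
    have xZ : x \notin Z by apply/negP => h; apply: Nx; right.
    by split => //; split => //; apply/eqv.
  have Dx : D01 x by apply: contrapT => h; apply: Nx; left.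
  have xZ : x \notin Z by apply/negP => h; apply: Nx; right.
  by split => //; apply/eqv => //; case: Hx.
have mS : forall b, measurable (gam 0 @^-1` (if b then Rplus A else Rminus A) `&` D01).
  move=> b; apply: (@mfromD _ _ _ _ Z (mlu t _ b) mN (esym (key b))).
  by move=> x [[_ Dx] [h|Zx]]; [case: (h Dx) | exact: Zx].
have E1 := vnullD (mlu t _ true) (mS true) mN vN (key true).
have E2 := vnullD (mlu t _ false) (mS false) mN vN (key false).
by rewrite E1 E2 /=.
Qed.
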